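(* Let $s>0$ and let $(X,d)$ be a compact monotone metric space with $\mathcal{H}^s(X)>0$. Then there exists an $s$-Hölder function $g:X\to\mathbb{R}$ such that $g(X)$ is a non-degenerate closed interval.
   Context: A metric space $(X,d)$ is monotone if there exist a linear order $<$ on $X$ and a constant $C$ such that $\operatorname{diam}([a,b])\le C\,d(a,b)$ for all $a,b\in X$, where $[a,b]=\{x\in X: a\le x\le b\}$; it is then called $C$-monotone. $\mathcal{H}^s$ denotes the $s$-dimensional Hausdorff measure. A function $g$ is $s$-Hölder if there is $K$ with $|g(a)-g(b)|\le K\,d(a,b)^s$ for all $a,b$. *)

(* Defs.v *)
From Stdlib Require Import Reals Lra Classical ClassicalEpsilon.
Open Scope R_scope.

Definition is_metric {X : Type} (d : X -> X -> R) : Prop :=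
  (forall x y, 0 <= d x y) /\
  (forall x y, d x y = 0 <-> x = y) /\
  (forall x y, d x y = d y x) /\
  (forall x y z, d x z <= d x y + d y z).

Definition is_open {X : Type} (d : X -> X -> R) (U : X -> Prop) : Prop :=
  forall x, U x -> exists r, 0 < r /\ forall y, d x y < r -> U y.

Definition compact_space {X : Type} (d : X -> X -> R) : Prop :=
  forall (I : Type) (O : I -> X -> Prop),
    (forall i, is_open d (O i)) ->
    (forall x, exists i, O i x) ->
    exists l : list I, forall x, exists i, List.In i l /\ O i x.

Definition diam_le {X : Type} (d : X -> X -> R) (A : X -> Prop) (r : R) : Prop :=
  forall x y, A x -> A y -> d x y <= r.

Definition dists {X : Type} (d : X -> X -> R) (A : X -> Prop) : R -> Prop :=
  fun r => exists x y, A x /\ A y /\ r = d x y.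

(** Diameter (sup of distances); 0 for the empty set. Unbounded sets get the
    junk value 0, but they never occur below (covers have diam <= delta). *)
Definition diam {X : Type} (d : X -> X -> R) (A : X -> Prop) : R.
Proof.
  destruct (excluded_middle_informative
              (bound (dists d A) /\ exists x, A x)) as [[Hb Hne] | _].
  - assert (He : exists r, dists d A r).
    { destruct Hne as [x Hx]. exists (d x x). exists x, x. auto. }
    exact (proj1_sig (completeness _ Hb He)).
  - exact 0.
Defined.

(** r^s with the convention 0^s = 0 (s > 0); note Stdlib's Rpower 0 s = 1. *)
Definition powS (r s : R) : R :=
  if Rle_dec r 0 then 0 else Rpower r s.

(** Extended nonnegative reals [0, +oo]. *)
Inductive ER : Type := Fin : R -> ER | PInf : ER.

Definition ER_lt (a b : ER) : Prop :=
  match a, b with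
  | Fin x, Fin y => x < y
  | Fin _, PInf => True
  | PInf, _ => False
  end.

Definition series_sum (a : nat -> R) : ER.
Proof.
  set (E := fun r => exists n, r = sum_f_R0 a n).
  destruct (excluded_middle_informative (bound E)) as [Hb | _].
  - assert (He : exists r, E r) by (exists (sum_f_R0 a 0); exists 0%nat; reflexivity).
    exact (Fin (proj1_sig (completeness E Hb He))).
  - exact PInf.
Defined.

(** Infimum in [0,+oo] of a set of elements of [0,+oo] (inf of empty = +oo). *)
Definition ER_inf (P : ER -> Prop) : ER.
Proof.
  set (E := fun r => P (Fin (- r))).
  destruct (excluded_middle_informative (bound E /\ exists r, E r)) as [[Hb He] | _].
  - exact (Fin (- proj1_sig (completeness E Hb He))).
  - exact PInf.
Defined.

(** Supremum in [0,+oo] of a set of elements of [0,+oo] (sup of empty = 0). *)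
Definition ER_sup (P : ER -> Prop) : ER.
Proof.
  set (E := fun r => P (Fin r)).
  destruct (excluded_middle_informative (P PInf \/ ~ bound E)) as [_ | _].
  - exact PInf.
  - destruct (excluded_middle_informative (exists r, E r)) as [He | _].
    + destruct (excluded_middle_informative (bound E)) as [Hb | _].
      * exact (Fin (proj1_sig (completeness E Hb He))).
      * exact PInf.
    + exact (Fin 0).
Defined.

Definition delta_cover {X : Type} (d : X -> X -> R) (delta : R)
    (U : nat -> X -> Prop) : Prop :=
  (forall x, exists n, U n x) /\ (forall n, diam_le d (U n) delta).

Definition Hs_delta {X : Type} (d : X -> X -> R) (s delta : R) : ER :=
  ER_inf (fun v => exists U : nat -> X -> Prop,
            delta_cover d delta U /\
            v = series_sum (fun n => powS (diam d (U n)) s)).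

(** H^s(X) = lim_{delta -> 0} H^s_delta(X) = sup_{delta > 0} H^s_delta(X). *)
Definition hausdorff_measure {X : Type} (d : X -> X -> R) (s : R) : ER :=
  ER_sup (fun v => exists delta, 0 < delta /\ v = Hs_delta d s delta).

Definition linear_order {X : Type} (le : X -> X -> Prop) : Prop :=
  (forall x, le x x) /\
  (forall x y, le x y -> le y x -> x = y) /\
  (forall x y z, le x y -> le y z -> le x z) /\
  (forall x y, le x y \/ le y x).

Definition monotone_space {X : Type} (d : X -> X -> R) : Prop :=
  exists (le : X -> X -> Prop) (C : R),
    linear_order le /\
    forall a b, diam_le d (fun x => le a x /\ le x b) (C * d a b).

Definition holder {X : Type} (d : X -> X -> R) (s : R) (g : X -> R) : Prop :=
  exists K, forall a b, Rabs (g a - g b) <= K * powS (d a b) s.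

(* Main.v *)
Require Import Defs.
From Stdlib Require Import Reals Lra Classical ClassicalEpsilon List Lia.
Open Scope R_scope.

Lemma Rpower_lt_base (a b s : R) : 0 < a -> a < b -> 0 < s -> Rpower a s < Rpower b s.
Proof.
  intros Ha Hab Hs. unfold Rpower. apply exp_increasing.
  apply Rmult_lt_compat_l; auto. apply ln_increasing; auto.
Qed.

Lemma powS_nonneg (r s : R) : 0 <= powS r s.
Proof. unfold powS. destruct (Rle_dec r 0). lra. unfold Rpower. left; apply exp_pos. Qed.

Lemma powS_0 (s : R) : powS 0 s = 0.
Proof. unfold powS. destruct (Rle_dec 0 0); lra. Qed.

Lemma powS_mono (a b s : R) : 0 < s -> a <= b -> powS a s <= powS b s.
Proof.
  intros Hs Hab. unfold powS.
  destruct (Rle_dec a 0); destruct (Rle_dec b 0).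
  - lra.
  - unfold Rpower; left; apply exp_pos.
  - lra.
  - destruct (Req_dec a b). subst; lra. left. apply Rpower_lt_base; lra.
Qed.

Lemma powS_lt_inv (a b s : R) : 0 < s -> powS a s < powS b s -> a < b.
Proof.
  intros Hs H. destruct (Rlt_le_dec a b); auto.
  pose proof (powS_mono b a s Hs r). lra.
Qed.

Lemma powS_small (s eps : R) : 0 < s -> 0 < eps ->
  exists delta, 0 < delta /\ forall r, r < delta -> powS r s < eps.
Proof.
  intros Hs He. exists (Rpower eps (/ s)). split.
  - unfold Rpower; apply exp_pos.
  - intros r Hr. unfold powS. destruct (Rle_dec r 0). lra.
    replace eps with (Rpower (Rpower eps (/s)) s).
    + apply Rpower_lt_base; lra.
    + rewrite Rpower_mult. replace (/ s * s) with 1 by (field; lra). apply Rpower_1; auto.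
Qed.

Lemma powS_mul (c r s : R) : 0 < c -> 0 <= r -> powS (c * r) s = Rpower c s * powS r s.
Proof.
  intros Hc Hr. unfold powS. destruct (Rle_dec r 0).
  - assert (r = 0) by lra. subst. rewrite Rmult_0_r. destruct (Rle_dec 0 0); lra.
  - destruct (Rle_dec (c*r) 0).
    + exfalso. assert (0 < c * r) by (apply Rmult_lt_0_compat; lra). lra.
    + rewrite Rpower_mult_distr; lra.
Qed.

Lemma ER_inf_le (P : ER -> Prop) :
  (forall r, P (Fin r) -> 0 <= r) ->
  (forall eps, 0 < eps -> exists r, P (Fin r) /\ r < eps) ->
  exists h, ER_inf P = Fin h /\ h <= 0.
Proof.
  intros H1 H2. unfold ER_inf. cbv zeta.
  destruct (excluded_middle_informative _) as [[Hb He] | Hn].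
  - destruct (completeness _ Hb He) as [sg [Hub Hlub]]. simpl.
    exists (- sg). split; auto.
    destruct (Rlt_le_dec sg 0) as [Hlt|]; [|lra]. exfalso.
    destruct (H2 (- sg)) as [r [Hr Hr2]]; [lra|].
    assert (- r <= sg). { apply Hub. rewrite Ropp_involutive. auto. } lra.
  - exfalso. apply Hn. split.
    + exists 0. intros r Hr. apply H1 in Hr. lra.
    + destruct (H2 1) as [r [Hr _]]; [lra|]. exists (- r). rewrite Ropp_involutive; auto.
Qed.

Lemma ER_sup_le (P : ER -> Prop) :
  (forall v, P v -> exists h, v = Fin h /\ h <= 0) ->
  ~ ER_lt (Fin 0) (ER_sup P).
Proof.
  intros H. unfold ER_sup. cbv zeta.
  assert (Hb : bound (fun r => P (Fin r))).
  { exists 0. intros r Hr. destruct (H _ Hr) as [h [Hh1 Hh2]]. inversion Hh1; subst; lra. }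
  destruct (excluded_middle_informative _) as [[HP|HP] | _].
  - destruct (H _ HP) as [h [Hh _]]. discriminate.
  - contradiction.
  - destruct (excluded_middle_informative _) as [He|].
    + destruct (excluded_middle_informative _) as [Hb'|]; [|contradiction].
      destruct (completeness _ Hb' He) as [sg [Hub Hlub]]. simpl.
      assert (sg <= 0). { apply Hlub. intros r Hr. destruct (H _ Hr) as [h [Hh1 Hh2]]. inversion Hh1; subst; lra. }
      lra.
    + simpl. lra.
Qed.

Lemma series_fin (a : nat -> R) (B : R) :
  (forall n, 0 <= a n) -> (forall n, sum_f_R0 a n <= B) ->
  exists v, series_sum a = Fin v /\ v <= B.
Proof.
  intros H0 H1. unfold series_sum. cbv zeta.
  destruct (excluded_middle_informative _) as [Hb | Hn].
  - destruct (completeness _ _ _) as [sg [Hub Hlub]]. simpl. exists sg. split; auto.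
    apply Hlub. intros r [n Hn0]. subst. auto.
  - exfalso. apply Hn. exists B. intros r [n Hn0]. subst. auto.
Qed.

Lemma series_nonneg (a : nat -> R) (v : R) :
  (forall n, 0 <= a n) -> series_sum a = Fin v -> 0 <= v.
Proof.
  intros H0. unfold series_sum. cbv zeta.
  destruct (excluded_middle_informative _) as [Hb | Hn].
  - destruct (completeness _ _ _) as [sg [Hub Hlub]]. simpl. intros E. inversion E; subst.
    assert (sum_f_R0 a 0 <= v) by (apply Hub; exists 0%nat; auto). simpl in H. specialize (H0 0%nat). lra.
  - discriminate.
Qed.

Lemma diam_bound {X : Type} (d : X -> X -> R) (A : X -> Prop) (r : R) :
  is_metric d -> diam_le d A r -> 0 <= r -> 0 <= diam d A <= r.
Proof.
  intros Hm HA Hr. unfold diam.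
  destruct (excluded_middle_informative _) as [[Hb Hne] | _].
  - destruct (completeness _ _ _) as [sg [Hub Hlub]]. simpl. split.
    + destruct Hne as [x Hx]. apply Rle_trans with (d x x). apply (proj1 Hm). apply Hub. exists x, x. auto.
    + apply Hlub. intros q [x [y [Hx [Hy Hq]]]]. subst. apply HA; auto.
  - lra.
Qed.

Section Covers.
Variable X : Type.
Variable d : X -> X -> R.
Variable s : R.

Definition cover_ok (A : X -> Prop) (l : list ((X -> Prop) * R)) : Prop :=
  (forall x, A x -> exists p, In p l /\ fst p x) /\
  (forall p, In p l -> 0 <= snd p /\ diam_le d (fst p) (snd p)).

Definition lsum (l : list ((X -> Prop) * R)) : R :=
  fold_right (fun p acc => powS (snd p) s + acc) 0 l.

Definition cost (A : X -> Prop) (c : R) : Prop :=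
  exists l, cover_ok A l /\ c = lsum l.

Definition dflt : (X -> Prop) * R := (fun _ => False, 0).

Lemma lsum_nonneg l : 0 <= lsum l.
Proof. induction l; simpl. lra. pose proof (powS_nonneg (snd a) s). lra. Qed.

Lemma lsum_app l1 l2 : lsum (l1 ++ l2) = lsum l1 + lsum l2.
Proof. induction l1; simpl. lra. rewrite IHl1. lra. Qed.

Lemma lsum_ge_elem l p : In p l -> powS (snd p) s <= lsum l.
Proof.
  induction l; simpl. tauto. intros [<-|H].
  - pose proof (lsum_nonneg l). lra.
  - pose proof (powS_nonneg (snd a) s). specialize (IHl H). lra.
Qed.

Lemma sum_nth_le l n : sum_f_R0 (fun i => powS (snd (nth i l dflt)) s) n <= lsum l.
Proof.
  revert n. induction l; intros n.
  - simpl. rewrite sum_eq_R0. lra. intros k _. destruct k; simpl; apply powS_0.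
  - destruct n.
    + simpl. pose proof (lsum_nonneg l). lra.
    + rewrite decomp_sum by lia. simpl. specialize (IHl n). lra.
Qed.

Lemma nth_valid l n : (forall p, In p l -> 0 <= snd p /\ diam_le d (fst p) (snd p)) ->
  0 <= snd (nth n l dflt) /\ diam_le d (fst (nth n l dflt)) (snd (nth n l dflt)).
Proof.
  intros H. destruct (Nat.lt_ge_cases n (length l)).
  - apply H. apply nth_In. auto.
  - rewrite nth_overflow by auto. simpl. split. lra. intros x y Hx. contradiction.
Qed.

Lemma F6_lemma : is_metric d -> 0 < s ->
  (forall eps, 0 < eps -> exists c, cost (fun _ => True) c /\ c < eps) ->
  ~ ER_lt (Fin 0) (hausdorff_measure d s).
Proof.
  intros Hm Hs Hc. unfold hausdorff_measure. apply ER_sup_le.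
  intros v [delta [Hd ->]]. unfold Hs_delta. apply ER_inf_le.
  - intros r [U [_ HU]]. symmetry in HU. eapply series_nonneg; [|exact HU].
    intros; apply powS_nonneg.
  - intros eps He.
    assert (Hpd : 0 < powS delta s).
    { unfold powS. destruct (Rle_dec delta 0). lra. unfold Rpower; apply exp_pos. }
    destruct (Hc (Rmin eps (powS delta s))) as [c [[l [[Hcov Hval] Hcl]] Hlt]].
    { apply Rmin_pos; auto. }
    pose (U := fun n => fst (nth n l dflt)).
    assert (Hsm : forall p, In p l -> snd p < delta).
    { intros p Hp. apply (powS_lt_inv _ _ s Hs). pose proof (lsum_ge_elem l p Hp).
      pose proof (Rmin_r eps (powS delta s)). lra. }
    destruct (series_fin (fun n => powS (diam d (U n)) s) (lsum l)) as [v [Hv Hvb]].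
    + intros; apply powS_nonneg.
    + intros n. eapply Rle_trans; [|apply (sum_nth_le l n)]. apply sum_Rle. intros k _.
      apply powS_mono; auto. destruct (nth_valid l k Hval) as [H1 H2].
      apply (diam_bound d _ _ Hm H2 H1).
    + exists v. split.
      * exists U. split; [|auto]. split.
        -- intros x. destruct (Hcov x I) as [p [Hp Hpx]]. destruct (In_nth _ _ dflt Hp) as [n [_ Hn]].
           exists n. unfold U. rewrite Hn. auto.
        -- intros n. destruct (nth_valid l n Hval) as [H1 H2].
           destruct (Nat.lt_ge_cases n (length l)).
           ++ pose proof (Hsm _ (nth_In l dflt H)). intros x y Hx Hy. unfold U in *.
              pose proof (H2 x y Hx Hy). lra.
           ++ intros x y Hx. unfold U in Hx. rewrite nth_overflow in Hx by auto. contradiction.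
      * pose proof (Rmin_l eps (powS delta s)). lra.
Qed.
End Covers.

Section SupLemma.
Variable X : Type.
Variable d : X -> X -> R.
Variable le : X -> X -> Prop.
Variable C : R.
Hypothesis Hm : is_metric d.
Hypothesis Hlo : linear_order le.
Hypothesis HC : 1 <= C.
Hypothesis HM : forall a b x y, le a x -> le x b -> le a y -> le y b -> d x y <= C * d a b.
Hypothesis Hcomp : compact_space d.

Lemma max_list (S : X -> Prop) (l : list (X * R)) s0 : S s0 ->
  exists m, S m /\ forall p, In p l -> S (fst p) -> le (fst p) m.
Proof.
  destruct Hlo as [Hr [Ha [Ht Htot]]].
  intros H0. induction l as [|p l IH].
  - exists s0. split; auto. intros p [].
  - destruct IH as [m [Hm1 Hm2]]. destruct (classic (S (fst p))) as [Hp|Hp].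
    + destruct (Htot (fst p) m) as [H|H].
      * exists m. split; auto. intros q [<-|Hq] Hs; auto.
      * exists (fst p). split; auto. intros q [<-|Hq] Hs; auto. eapply Ht; eauto.
    + exists m. split; auto. intros q [<-|Hq] Hs; auto. contradiction.
Qed.

Lemma d_pos x y : x <> y -> 0 < d x y.
Proof.
  destruct Hm as [H0 [H1 _]]. intros Hxy. destruct (H0 x y); auto.
  exfalso. apply Hxy. apply H1. auto.
Qed.

Lemma sup_lemma (S : X -> Prop) : (exists x, S x) ->
  exists x, (forall y, S y -> le y x) /\ forall r, 0 < r -> exists y, S y /\ d y x < r.
Proof.
  intros [s0 Hs0]. destruct Hlo as [Hr [Ha [Ht Htot]]].
  destruct Hm as [Hd0 [Hd1 [Hds Hdt]]].
  apply NNPP. intros H.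
  assert (HU : forall x, (forall y, S y -> le y x) -> exists r, 0 < r /\ forall y, S y -> r <= d y x).
  { intros x Hub. apply NNPP. intros Hn. apply H. exists x. split; auto.
    intros r Hr0. apply NNPP. intros Hn2. apply Hn. exists r. split; auto.
    intros y Sy. destruct (Rlt_le_dec (d y x) r); auto. exfalso. apply Hn2. eauto. }
  set (O := fun (i : X * R) (z : X) =>
    (S (fst i) /\ le z (fst i) /\ z <> fst i) \/
    (0 < snd i /\ (forall y, S y -> snd i <= d y (fst i)) /\ d (fst i) z < snd i)).
  destruct (Hcomp (X * R)%type O) as [l Hl].
  - intros i z [[H1 [H2 H3]] | [H1 [H2 H3]]].
    + exists (d z (fst i) / C). split.
      * apply Rdiv_lt_0_compat. apply d_pos; auto. lra.
      * intros w Hw. left. split; auto. apply NNPP. intros Hn.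
        assert (Hcw : le (fst i) w).
        { destruct (Htot w (fst i)) as [Hwc|]; auto.
          destruct (classic (w = fst i)) as [->|]; auto. exfalso; auto. }
        assert (d z (fst i) <= C * d z w) by (apply HM; eauto).
        assert (C * d z w < d z (fst i)).
        { apply Rmult_lt_reg_r with (/ C). apply Rinv_0_lt_compat; lra.
          rewrite Rmult_comm, <- Rmult_assoc, Rinv_l, Rmult_1_l by lra. exact Hw. }
        lra.
    + exists (snd i - d (fst i) z). split. lra.
      intros w Hw. right. split; auto. split; auto. pose proof (Hdt (fst i) z w). lra.
  - intros z. destruct (classic (forall y, S y -> le y z)) as [Hub|Hn].
    + destruct (HU z Hub) as [r [Hr0 Hr1]]. exists (z, r). right. simpl. split; auto. split; auto.
      replace (d z z) with 0. auto. symmetry; apply Hd1; auto.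
    + apply not_all_ex_not in Hn. destruct Hn as [y Hy].
      apply imply_to_and in Hy. destruct Hy as [Sy Hy].
      exists (y, 0). left. simpl. split; auto. split.
      * destruct (Htot y z); tauto.
      * intros ->. apply Hy; auto.
  - destruct (max_list S (map (fun i => (fst i, snd i)) l) s0 Hs0) as [m [Sm Hmax]].
    destruct (Hl m) as [i [Hi Hoi]].
    assert (Hmi : S (fst i) -> le (fst i) m).
    { intros Hs. apply (Hmax (fst i, snd i)). apply in_map_iff. exists i; auto. auto. }
    destruct Hoi as [[H1 [H2 H3]] | [H1 [H2 H3]]].
    + apply H3. apply Ha; auto.
    + specialize (H2 m Sm). rewrite Hds in H3. lra.
Qed.
End SupLemma.

Lemma le_eps (a b : R) : (forall eps, 0 < eps -> a <= b + eps) -> a <= b.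
Proof.
  intros H. destruct (Rle_lt_dec a b); auto. specialize (H ((a - b)/2)). lra.
Qed.

Section FDef.
Variable X : Type.
Variable d : X -> X -> R.
Variable s : R.

Lemma cost_nonneg A c : cost X d s A c -> 0 <= c.
Proof. intros [l [_ ->]]. apply lsum_nonneg. Qed.

Definition Fm (A : X -> Prop) : R.
Proof.
  destruct (excluded_middle_informative (exists c, cost X d s A c)) as [H|_].
  - assert (Hb : bound (fun r => cost X d s A (- r))).
    { exists 0. intros r Hr. apply cost_nonneg in Hr. lra. }
    assert (He : exists r, cost X d s A (- r)).
    { destruct H as [c Hc]. exists (- c). rewrite Ropp_involutive. auto. }
    exact (- proj1_sig (completeness _ Hb He)).
  - exact 0.
Defined.

Lemma Fm_le A c : cost X d s A c -> Fm A <= c.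
Proof.
  intros Hc. unfold Fm. destruct (excluded_middle_informative _) as [H|Hn].
  - destruct (completeness _ _ _) as [sg [Hub Hlub]]. simpl.
    assert (- c <= sg) by (apply Hub; rewrite Ropp_involutive; auto). lra.
  - exfalso; eauto.
Qed.

Lemma Fm_nonneg A : 0 <= Fm A.
Proof.
  unfold Fm. destruct (excluded_middle_informative _) as [H|Hn].
  - destruct (completeness _ _ _) as [sg [Hub Hlub]]. simpl.
    assert (sg <= 0). { apply Hlub. intros r Hr. apply cost_nonneg in Hr. lra. } lra.
  - lra.
Qed.

Lemma Fm_approx A : (exists c, cost X d s A c) -> forall eps, 0 < eps ->
  exists c, cost X d s A c /\ c < Fm A + eps.
Proof.
  intros Hex eps He. unfold Fm. destruct (excluded_middle_informative _) as [H|Hn]; [|contradiction].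
  destruct (completeness _ _ _) as [sg [Hub Hlub]]. simpl.
  apply NNPP. intros Hno.
  assert (sg <= sg - eps).
  { apply Hlub. intros r Hr. destruct (Rle_lt_dec r (sg - eps)); auto.
    exfalso. apply Hno. exists (- r). split; auto. lra. }
  lra.
Qed.

Lemma Fm_sub A B1 B2 : (exists c, cost X d s B1 c) -> (exists c, cost X d s B2 c) ->
  (forall x, A x -> B1 x \/ B2 x) -> Fm A <= Fm B1 + Fm B2.
Proof.
  intros H1 H2 HA. apply le_eps. intros eps He.
  destruct (Fm_approx B1 H1 (eps/2)) as [c1 [[l1 [[Hc1 Hv1] ->]] Hlt1]]; [lra|].
  destruct (Fm_approx B2 H2 (eps/2)) as [c2 [[l2 [[Hc2 Hv2] ->]] Hlt2]]; [lra|].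
  assert (Fm A <= lsum X s (l1 ++ l2)).
  { apply Fm_le. exists (l1 ++ l2). split; [split|reflexivity].
    - intros x Hx. destruct (HA x Hx) as [Hb|Hb].
      + destruct (Hc1 x Hb) as [p [Hp Hpx]]. exists p. split; auto. apply in_or_app; auto.
      + destruct (Hc2 x Hb) as [p [Hp Hpx]]. exists p. split; auto. apply in_or_app; auto.
    - intros p Hp. apply in_app_or in Hp. destruct Hp; auto. }
  rewrite lsum_app in H. lra.
Qed.

Lemma Fm_mono A B : (exists c, cost X d s B c) -> (forall x, A x -> B x) -> Fm A <= Fm B.
Proof.
  intros H HA. apply le_eps. intros eps He.
  destruct (Fm_approx B H eps He) as [c [[l [[Hc Hv] ->]] Hlt]].
  assert (Fm A <= lsum X s l).
  { apply Fm_le. exists l. split; auto. split; auto. }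
  lra.
Qed.

Lemma Fm_diam A r : 0 <= r -> diam_le d A r -> Fm A <= powS r s.
Proof.
  intros Hr HA. replace (powS r s) with (lsum X s ((A, r) :: nil)) by (simpl; lra).
  apply Fm_le. eexists. split; [|reflexivity]. split.
  - intros x Hx. exists (A, r). simpl. auto.
  - intros p [<-|[]]. simpl. auto.
Qed.
End FDef.

Theorem theorem2p1 (X : Type) (d : X -> X -> R) (s : R) :
  is_metric d ->
  0 < s ->
  compact_space d ->
  monotone_space d ->
  ER_lt (Fin 0) (hausdorff_measure d s) ->
  exists g : X -> R,
    holder d s g /\
    exists a b : R, a < b /\
      forall y, (exists x, g x = y) <-> (a <= y /\ y <= b).
Proof.
  intros Hm Hs Hc [le [C0 [Hlo HM0]]] Hpos.
  pose proof Hlo as [Hr [Ha [Ht Htot]]].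
  pose proof Hm as [Hd0 [Hd1 [Hds Hdt]]].
  set (C := Rabs C0 + 1).
  assert (HC : 1 <= C) by (unfold C; pose proof (Rabs_pos C0); lra).
  assert (HM : forall a b x y, le a x -> le x b -> le a y -> le y b -> d x y <= C * d a b).
  { intros a b x y H1 H2 H3 H4. pose proof (HM0 a b x y (conj H1 H2) (conj H3 H4)).
    pose proof (Rle_abs C0). pose proof (Hd0 a b).
    assert (C0 * d a b <= C * d a b) by (apply Rmult_le_compat_r; unfold C; lra). lra. }
  assert (Hdxx : forall x, d x x = 0) by (intros; apply Hd1; auto).
  destruct (classic (exists x : X, True)) as [[x0 _]|Hne].
  2:{ exfalso. apply (F6_lemma X d s Hm Hs); auto. intros eps He. exists 0. split; auto.
      exists nil. split; [split|reflexivity].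
      - intros x _. exfalso. apply Hne. eauto.
      - intros p []. }
  destruct (sup_lemma X d le C Hm Hlo HC HM Hc (fun _ => True)) as [M [HMub _]]; [eauto|].
  set (le' := fun x y => le y x).
  assert (Hlo' : linear_order le').
  { unfold le'. split; [|split; [|split]]; eauto.
    }
  assert (HM' : forall a b x y, le' a x -> le' x b -> le' a y -> le' y b -> d x y <= C * d a b).
  { unfold le'. intros a b x y H1 H2 H3 H4. rewrite (Hds a b). apply HM; auto. }
  destruct (sup_lemma X d le' C Hm Hlo' HC HM' Hc (fun _ => True)) as [m [Hmlb _]]; [eauto|].
  unfold le' in Hmlb.
  assert (Hcost : forall A, exists c, cost X d s A c).
  { intros A. eexists. exists ((fun _ => True, C * d m M) :: nil). split; [split|reflexivity].
    - intros x Hx. eexists; split; [left; reflexivity|]. simpl. auto.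
    - intros p [<-|[]]. simpl. split.
      + pose proof (Hd0 m M). apply Rmult_le_pos; lra.
      + intros x y _ _. apply HM; auto. }
  assert (HFX : 0 < Fm X d s (fun _ => True)).
  { destruct (Rlt_le_dec 0 (Fm X d s (fun _ => True))) as [|Hle]; auto. exfalso.
    apply (F6_lemma X d s Hm Hs); auto. intros eps He.
    destruct (Fm_approx X d s (fun _ => True) (Hcost _) eps He) as [c [Hc1 Hc2]]. exists c. split; auto. lra. }
  set (g := fun x => Fm X d s (fun y => le y x)).
  assert (Hstep : forall a b (B : X -> Prop), le a b ->
    (forall y, le a y -> le y b -> y <> a -> B y) -> g b <= g a + Fm X d s B).
  { intros a b B Hab HB. unfold g. apply Fm_sub; auto.
    intros y Hyb. destruct (Htot y a) as [|Hay]; auto.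
    destruct (classic (y = a)) as [->|Hya]; auto. }
  assert (Hmono : forall a b, le a b -> g a <= g b).
  { intros a b Hab. unfold g. apply Fm_mono; auto. intros y Hy. eauto. }
  assert (Hint : forall a b, le a b -> g b <= g a + powS (C * d a b) s).
  { intros a b Hab. eapply Rle_trans. apply (Hstep a b (fun y => le a y /\ le y b) Hab); auto.
    apply Rplus_le_compat_l. apply Fm_diam.
    - pose proof (Hd0 a b). apply Rmult_le_pos; lra.
    - intros x y [H1 H2] [H3 H4]. apply HM; auto. }
  assert (HCpos : 0 < C) by lra.
  exists g. split.
  - exists (Rpower C s). intros a b.
    assert (Hgen : forall a b, le a b -> Rabs (g a - g b) <= Rpower C s * powS (d a b) s).
    { intros a0 b0 Hab. rewrite <- powS_mul by auto. pose proof (Hint a0 b0 Hab).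
      pose proof (Hmono a0 b0 Hab). rewrite Rabs_left1 by lra. lra. }
    destruct (Htot a b) as [Hab|Hba]; auto.
    rewrite Rabs_minus_sym, Hds. auto.
  - assert (HgM : 0 < g M).
    { eapply Rlt_le_trans. exact HFX. unfold g. apply Fm_mono; auto. }
    exists 0, (g M). split; auto. intros t. split.
    + intros [x <-]. split. apply Fm_nonneg. apply Hmono; auto.
    + intros [Ht0 HtM].
      assert (Hgm : g m <= t).
      { assert (g m <= powS 0 s).
        { apply Fm_diam. lra. intros x y Hx Hy.
          assert (x = m) by auto. assert (y = m) by auto. subst. rewrite Hdxx. lra. }
        rewrite powS_0 in H. lra. }
      destruct (sup_lemma X d le C Hm Hlo HC HM Hc (fun y => g y <= t)) as [x [Hxub Hxcl]]; [eauto|].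
      exists x.
      assert (H1 : g x <= t).
      { apply le_eps. intros eps He. destruct (powS_small s eps Hs He) as [del [Hdel Hsm]].
        destruct (Hxcl (del / C)) as [y [Sy Hy]]. apply Rdiv_lt_0_compat; lra.
        pose proof (Hint y x (Hxub y Sy)).
        assert (C * d y x < del).
        { apply Rmult_lt_reg_r with (/ C). apply Rinv_0_lt_compat; lra.
          rewrite (Rmult_comm C), Rmult_assoc, Rinv_r, Rmult_1_r by lra. exact Hy. }
        pose proof (Hsm _ H0). lra. }
      apply Rle_antisym; auto.
      apply NNPP. intros Hlt. apply Rnot_le_lt in Hlt.
      assert (HTne : exists z, ~ le z x).
      { exists M. intros HMx. assert (M = x) by auto. subst. lra. }
      destruct (sup_lemma X d le' C Hm Hlo' HC HM' Hc (fun z => ~ le z x) HTne) as [w [Hwlb Hwcl]].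
      unfold le' in Hwlb.
      destruct (classic (le w x)) as [Hwx|Hwx].
      * destruct (powS_small s (t - g x) Hs) as [del [Hdel Hsm]]; [lra|].
        destruct (Hwcl (del / (C * C))) as [z [Tz Hz]].
        { apply Rdiv_lt_0_compat; auto. apply Rmult_lt_0_compat; lra. }
        assert (Hxz : le x z) by (destruct (Htot x z); tauto).
        assert (d x z <= C * d w z) by (apply HM; eauto).
        assert (C * d x z < del).
        { rewrite Hds in Hz. assert (C * (C * d w z) < del).
          { apply Rmult_lt_reg_r with (/ (C * C)). apply Rinv_0_lt_compat, Rmult_lt_0_compat; lra.
            replace (C * (C * d w z) * / (C * C)) with (d w z) by (field; lra). exact Hz. }
          assert (C * d x z <= C * (C * d w z)) by (apply Rmult_le_compat_l; lra). lra. }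
        pose proof (Hint x z Hxz). pose proof (Hsm _ H0).
        apply Tz. apply Hxub. lra.
      * assert (Hxw : le x w) by (destruct (Htot x w); tauto).
        assert (Fm X d s (fun y => y = w) <= powS 0 s).
        { apply Fm_diam. lra. intros y1 y2 -> ->. rewrite Hdxx. lra. }
        rewrite powS_0 in H.
        assert (g w <= g x + Fm X d s (fun y => y = w)).
        { apply Hstep; auto. intros y Hxy Hyw Hyx.
          assert (~ le y x) by (intros Hyx'; apply Hyx; auto).
          apply Ha; auto. }
        apply Hwx. apply Hxub. lra.
Qed.
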